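(* Let $\mathcal{C}=\mathsf{CSS}(A,B)$ be a qudit CSS code on $n$ qudits with distance at least $3$, and $H_A$ a parity-check matrix for $A$. Then any permutation automorphism $\tau$ of $\mathcal{C}$ such that $H_AP_\tau=H_A$, where $P_\tau$ is the permutation matrix of $\tau$, acts as a logical identity on $\mathcal{C}$.
   Context: Let $q$ be a prime power. For classical codes $A,B\subseteq\mathbb{F}_q^n$ with full-row-rank parity-check matrices $H_A,H_B$ satisfying $H_AH_B^T=0$, $\mathsf{CSS}(A,B)$ is the qudit stabilizer code with $X$-type stabilizers $X^v$ ($v$ in the row space of $H_A$) and $Z$-type stabilizers $Z^w$ ($w$ in the row space of $H_B$). A permutation $\tau\in S_n$ is a permutation automorphism of a classical code with parity-check matrix $H$ (of $r$ rows) if $UH=HP_\tau$ for some $U\in\mathrm{GL}_r(\mathbb{F}_q)$; it is a permutation automorphism of $\mathsf{CSS}(A,B)$ if it is one for both $A$ and $B$. Permuting physical qudits by $\tau$ is then an operator on the code; a logical identity acts as the identity on the codespace. *)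

(* Defs.v *)
From HB Require Import structures.
From mathcomp Require Import all_boot all_order all_algebra all_fingroup all_field.
Set Implicit Arguments. Unset Strict Implicit. Unset Printing Implicit Defensive.
Import GRing.Theory.
Local Open Scope ring_scope.

Section QuditCSS.
Variables (F : finFieldType) (n : nat).

(* States of n qudits: amplitude functions on the computational basis |x>, x in F^n. *)
Definition state := {ffun 'rV[F]_n -> algC}.

Definition nontrivial_additive_char (chi : F -> algC) :=
  (forall a b, chi (a + b) = chi a * chi b) /\ exists a, chi a != 1.

(* Generalized Pauli operators: X^v |x> = |x + v>,  Z^w |x> = chi(w.x) |x>. *)
Definition Xop (v : 'rV[F]_n) (psi : state) : state := [ffun x => psi (x - v)].
Definition Zop (chi : F -> algC) (w : 'rV[F]_n) (psi : state) : state :=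
  [ffun x => chi ((w *m x^T) 0 0) * psi x].

Definition in_css_codespace (chi : F -> algC) rA rB
    (HA : 'M[F]_(rA, n)) (HB : 'M[F]_(rB, n)) (psi : state) :=
  (forall v : 'rV[F]_n, (v <= HA)%MS -> Xop v psi = psi) /\
  (forall w : 'rV[F]_n, (w <= HB)%MS -> Zop chi w psi = psi).

Definition pauli_weight (a b : 'rV[F]_n) : nat :=
  #|[set i : 'I_n | (a 0 i != 0) || (b 0 i != 0)]|.

(* Distance >= d: every Pauli X^a Z^b commuting with all stabilizers
   (HB a^T = 0, HA b^T = 0) and not itself a stabilizer (up to phase)
   has weight >= d. *)
Definition css_distance_ge rA rB (HA : 'M[F]_(rA, n)) (HB : 'M[F]_(rB, n)) (d : nat) :=
  forall a b : 'rV[F]_n,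
    HB *m a^T = 0 -> HA *m b^T = 0 ->
    ~ ((a <= HA)%MS /\ (b <= HB)%MS) ->
    (d <= pauli_weight a b)%N.

Definition is_perm_aut r (H : 'M[F]_(r, n)) (tau : 'S_n) :=
  exists U : 'M[F]_r, U \in unitmx /\ U *m H = H *m perm_mx tau.

(* Permuting physical qudits by tau: qudit i is moved to position tau i,
   i.e. |x> |-> |y> with y_(tau i) = x_i. *)
Definition qudit_perm (tau : 'S_n) (psi : state) : state :=
  [ffun y : 'rV[F]_n => psi (\row_i y 0 (tau i))].

End QuditCSS.

(* Main.v *)
Require Import Defs.
From HB Require Import structures.
From mathcomp Require Import all_boot all_order all_algebra all_fingroup all_field.
Import GRing.Theory.
Local Open Scope ring_scope.

Lemma supp_lem (F : finFieldType) (n rB : nat) (HB : 'M[F]_(rB, n)) (chi : F -> algC)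
  (psi : state F n) (y : 'rV[F]_n) :
  nontrivial_additive_char chi ->
  (forall w : 'rV[F]_n, (w <= HB)%MS -> Zop chi w psi = psi) ->
  HB *m y^T != 0 -> psi y = 0.
Proof.
move=> [_ [a0 ha0]] Zs nz.
have [k hk] : exists k, (HB *m y^T) k 0 != 0.
  case: (boolP [exists k, (HB *m y^T) k 0 != 0]) => [/existsP//|/existsPn H].
  exfalso; move/negP: nz; apply; apply/eqP/matrixP => k j; rewrite ord1.
  by move: (H k); rewrite negbK => /eqP ->; rewrite mxE.
set c := (HB *m y^T) k 0 in hk.
have wsub : ((a0 / c) *: row k HB <= HB)%MS by rewrite scalemx_sub ?row_sub.
have := congr1 (fun f : state F n => f y) (Zs _ wsub).
rewrite /Zop ffunE -scalemxAl -row_mul mxE [X in chi (_ * X)]mxE -/c.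
rewrite mulfVK // => E.
apply/eqP; move: ha0; apply: contraR => psi0.
have : (chi a0 - 1) * psi y == 0 by rewrite mulrBl E mul1r subrr.
by rewrite mulf_eq0 (negbTE psi0) orbF subr_eq0.
Qed.

Lemma key (F : finFieldType) (n rA rB : nat)
    (HA : 'M[F]_(rA, n)) (HB : 'M[F]_(rB, n)) (tau : 'S_n) (i : 'I_n) (y : 'rV[F]_n) :
  css_distance_ge HA HB 3 -> HA *m perm_mx tau = HA ->
  HB *m y^T = 0 -> y 0 i = y 0 (tau i).
Proof.
move=> dist HAP Hy.
pose b : 'rV[F]_n := \row_k ((k == i)%:R - (k == tau i)%:R).
have colA : forall r, HA r i = HA r (tau i).
  move=> r; rewrite -[in RHS]HAP mxE (bigD1 i) //= big1.
    by rewrite addr0 !mxE eqxx mulr1n mulr1.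
  by move=> j hj; rewrite !mxE (inj_eq perm_inj) (negbTE hj) mulr0n mulr0.
have Hb : HA *m b^T = 0.
  apply/matrixP => r j; rewrite ord1 !mxE.
  rewrite (eq_bigr (fun k => HA r k * ((k == i)%:R - (k == tau i)%:R))); last first.
    by move=> k _; rewrite !mxE.
  rewrite (eq_bigr (fun k => HA r k * (k == i)%:R - HA r k * (k == tau i)%:R)); last first.
    by move=> k _; rewrite mulrBr.
  rewrite sumrB.
  rewrite (bigD1 i) //= big1; last by move=> k /negbTE ->; rewrite mulr0.
  rewrite (bigD1 (tau i)) //= [X in _ - (_ + X)]big1; last by move=> k /negbTE ->; rewrite mulr0.
  by rewrite !eqxx !mulr1 !addr0 colA subrr.
have bsub : (b <= HB)%MS.
  have := dist 0 b; rewrite trmx0 mulmx0 => /(_ erefl Hb).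
  rewrite sub0mx /=.
  case: (boolP (b <= HB)%MS) => // nb H.
  have W : (2 < pauli_weight 0 b)%N by apply: H; case.
  suff : (pauli_weight 0 b <= 2)%N by move=> h1; have := leq_trans W h1.
  rewrite /pauli_weight.
  apply: leq_trans (_ : #|[set i; tau i]| <= 2)%N; last by rewrite cards2; case: (_ == _).
  apply: subset_leq_card; apply/subsetP => k; rewrite !inE mxE eqxx /= !mxE.
  by case: (k == i); case: (k == tau i); rewrite ?subrr ?eqxx ?orbT.
have E : (b *m y^T) 0 0 = y 0 i - y 0 (tau i).
  rewrite mxE (eq_bigr (fun k => ((k == i)%:R - (k == tau i)%:R) * y 0 k)); last first.
    by move=> k _; rewrite !mxE.
  rewrite (eq_bigr (fun k => (k == i)%:R * y 0 k - (k == tau i)%:R * y 0 k)); last first.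
    by move=> k _; rewrite mulrBl.
  rewrite sumrB (bigD1 i) //= big1; last by move=> k /negbTE ->; rewrite mul0r.
  rewrite (bigD1 (tau i)) //= [X in _ - (_ + X)]big1; last by move=> k /negbTE ->; rewrite mul0r.
  by rewrite !eqxx !mul1r !addr0.
have [v hv] := submxP bsub.
have : b *m y^T = 0 by rewrite hv -mulmxA Hy mulmx0.
move=> /(congr1 (fun M : 'M[F]_1 => M 0 0)); rewrite E mxE => /eqP; rewrite subr_eq0 => /eqP.
done.
Qed.

Theorem corollary3 (F : finFieldType) (n rA rB : nat)
    (HA : 'M[F]_(rA, n)) (HB : 'M[F]_(rB, n)) (chi : F -> algC) (tau : 'S_n) :
  row_free HA -> row_free HB -> HA *m HB^T = 0 ->
  nontrivial_additive_char chi ->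
  css_distance_ge HA HB 3 ->
  is_perm_aut HA tau -> is_perm_aut HB tau ->
  HA *m perm_mx tau = HA ->
  forall psi : state F n, in_css_codespace chi HA HB psi ->
    qudit_perm tau psi = psi.
Proof.
move=> _ _ _ nch dist _ [U [Uu UHB]] HAP psi [Xs Zs].
apply/ffunP => y; rewrite /qudit_perm ffunE.
case: (boolP (HB *m y^T == 0)) => [/eqP Hy|Hy].
  congr (psi _); apply/rowP => i; rewrite mxE.
  by rewrite -(@key _ _ _ _ _ _ _ i _ dist HAP Hy).
have ey : \row_i y 0 (tau i) = y *m (perm_mx tau)^T.
  apply/rowP => j; rewrite !mxE (bigD1 (tau j)) //= big1.
    by rewrite addr0 !mxE eqxx mulr1n mulr1.
  by move=> k hk; rewrite !mxE eq_sym (negbTE hk) mulr0n mulr0.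
rewrite (@supp_lem _ _ _ _ _ _ _ nch Zs Hy); apply: (@supp_lem _ _ _ _ _ _ _ nch Zs).
rewrite ey trmx_mul trmxK mulmxA -UHB; apply: contra Hy => /eqP H.
by rewrite -(mulKmx Uu (HB *m y^T)) (mulmxA U) H mulmx0.
Qed.
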